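(* Let $\mathcal{A}=\mathcal{R}*_K\mathcal{S}*_L\mathcal{T}\in\mathbb{C}^{I_1\times\cdots\times I_N\times J_1\times\cdots\times J_M}$, where $\mathcal{R}\in\mathbb{C}^{I_1\times\cdots\times I_N\times H_1\times\cdots\times H_K}$, $\mathcal{S}\in\mathbb{C}^{H_1\times\cdots\times H_K\times G_1\times\cdots\times G_L}$ and $\mathcal{T}\in\mathbb{C}^{G_1\times\cdots\times G_L\times J_1\times\cdots\times J_M}$, and let $\mathcal{A}_{\pi\dagger}=\mathcal{T}^{\dagger}*_L(\mathcal{R}^{\dagger}*_N\mathcal{A}*_M\mathcal{T}^{\dagger})^{\dagger}*_K\mathcal{R}^{\dagger}$. Consider the factorization of $\mathcal{A}_{\pi\dagger}$ with factors $\mathcal{R}'=\mathcal{T}^{\dagger}$, $\mathcal{S}'=(\mathcal{R}^{\dagger}*_N\mathcal{A}*_M\mathcal{T}^{\dagger})^{\dagger}$, $\mathcal{T}'=\mathcal{R}^{\dagger}$, and the corresponding product Moore–Penrose inverse $(\mathcal{A}_{\pi\dagger})_{\pi\dagger}=\mathcal{T}'^{\dagger}*_K(\mathcal{R}'^{\dagger}*_M\mathcal{A}_{\pi\dagger}*_N\mathcal{T}'^{\dagger})^{\dagger}*_L\mathcal{R}'^{\dagger}=\mathcal{R}*_K(\mathcal{T}*_M\mathcal{A}_{\pi\dagger}*_N\mathcal{R})^{\dagger}*_L\mathcal{T}$. Then $(\mathcal{A}_{\pi\dagger})_{\pi\dagger}=\mathcal{A}$.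
   Context: $\mathbb{C}^{I_1\times\cdots\times I_N}$ denotes the set of complex tensors of order $N$ and dimension $I_1\times\cdots\times I_N$. For $\mathcal{A}\in\mathbb{C}^{I_1\times\cdots\times I_N\times K_1\times\cdots\times K_N}$ and $\mathcal{B}\in\mathbb{C}^{K_1\times\cdots\times K_N\times J_1\times\cdots\times J_M}$, the Einstein product $\mathcal{A}*_N\mathcal{B}$ is defined by $(\mathcal{A}*_N\mathcal{B})_{i_1\dots i_N j_1\dots j_M}=\sum_{k_1,\dots,k_N}a_{i_1\dots i_N k_1\dots k_N}b_{k_1\dots k_N j_1\dots j_M}$; it is associative. $\mathcal{A}^H$ denotes the conjugate transpose. For $\mathcal{A}\in\mathbb{C}^{I_1\times\cdots\times I_N\times J_1\times\cdots\times J_M}$ the Moore–Penrose inverse $\mathcal{A}^{\dagger}$ is the unique $\mathcal{X}\in\mathbb{C}^{J_1\times\cdots\times J_M\times I_1\times\cdots\times I_N}$ with $\mathcal{A}*_M\mathcal{X}*_N\mathcal{A}=\mathcal{A}$, $\mathcal{X}*_N\mathcal{A}*_M\mathcal{X}=\mathcal{X}$, $(\mathcal{A}*_M\mathcal{X})^H=\mathcal{A}*_M\mathcal{X}$, $(\mathcal{X}*_N\mathcal{A})^H=\mathcal{X}*_N\mathcal{A}$ (in particular $(\mathcal{A}^{\dagger})^{\dagger}=\mathcal{A}$). For a tensor $\mathcal{Z}$ with a factorization $\mathcal{Z}=\mathcal{P}*_k\mathcal{Q}*_l\mathcal{U}$, its product Moore–Penrose inverse relative to that factorization is $\mathcal{U}^{\dagger}*_l(\mathcal{P}^{\dagger}*\mathcal{Z}*\mathcal{U}^{\dagger})^{\dagger}*_k\mathcal{P}^{\dagger}$,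 with contractions over the appropriate shared modes. *)

(* Defs.v *)
From HB Require Import structures.
From mathcomp Require Import all_boot all_order all_algebra.
From mathcomp Require Import reals.
From mathcomp Require Import complex.
From Stdlib Require Import ClassicalEpsilon.
Set Implicit Arguments. Unset Strict Implicit. Unset Printing Implicit Defensive.
Import Order.TTheory GRing.Theory Num.Theory.
Local Open Scope ring_scope.

Definition midx (n : nat) (d : 'I_n -> nat) := {dffun forall k : 'I_n, 'I_(d k)}.

Definition tensor (R : realType) (N : nat) (I : 'I_N -> nat)
  (M : nat) (J : 'I_M -> nat) := midx I -> midx J -> R[i].

Definition ein (R : realType) N (I : 'I_N -> nat) K (H : 'I_K -> nat)
  M (J : 'I_M -> nat) (A : tensor R I H) (B : tensor R H J) : tensor R I J :=
  fun i j => \sum_(k : midx H) A i k * B k j.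

Definition ctr (R : realType) N (I : 'I_N -> nat) M (J : 'I_M -> nat)
  (A : tensor R I J) : tensor R J I := fun j i => (A i j)^*.

Definition is_MP (R : realType) N (I : 'I_N -> nat) M (J : 'I_M -> nat)
  (A : tensor R I J) (X : tensor R J I) : Prop :=
  [/\ ein (ein A X) A = A, ein (ein X A) X = X,
      ctr (ein A X) = ein A X & ctr (ein X A) = ein X A].

Definition zero_tensor (R : realType) N (I : 'I_N -> nat) M (J : 'I_M -> nat)
  : tensor R I J := fun _ _ => 0.

(* The Moore-Penrose inverse: the (unique) X satisfying the Penrose
   equations (chosen by Hilbert's epsilon; it exists for every tensor). *)
Definition pinv (R : realType) N (I : 'I_N -> nat) M (J : 'I_M -> nat)
  (A : tensor R I J) : tensor R J I :=
  epsilon (inhabits (@zero_tensor R _ J _ I)) (fun X => is_MP A X).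

Definition pmp (R : realType) N (I : 'I_N -> nat) K (H : 'I_K -> nat)
  L (G : 'I_L -> nat) M (J : 'I_M -> nat)
  (P : tensor R I H) (Z : tensor R I J) (U : tensor R G J) : tensor R J I :=
  ein (ein (pinv U) (pinv (ein (ein (pinv P) Z) (pinv U)))) (pinv P).

(* Main.v *)
Require Import Defs.
From mathcomp Require Import all_boot all_order all_algebra.
From mathcomp Require Import reals complex.
From Stdlib Require Import FunctionalExtensionality ClassicalEpsilon Setoid.
Set Implicit Arguments. Unset Strict Implicit. Unset Printing Implicit Defensive.
Import Order.TTheory GRing.Theory Num.Theory.
Local Open Scope ring_scope.

Section T.
Variable R : realType.

Lemma einA N (I : 'I_N -> nat) K (H : 'I_K -> nat) L (G : 'I_L -> nat) M (J : 'I_M -> nat)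
  (A : tensor R I H) (B : tensor R H G) (C : tensor R G J) :
  ein (ein A B) C = ein A (ein B C).
Proof.
apply: functional_extensionality => i; apply: functional_extensionality => j.
rewrite /ein; under eq_bigr do rewrite big_distrl /=.
rewrite exchange_big; apply: eq_bigr => k _; rewrite big_distrr; apply: eq_bigr => l _.
by rewrite -mulrA.
Qed.

Lemma ctr_ein N (I : 'I_N -> nat) K (H : 'I_K -> nat) M (J : 'I_M -> nat)
  (A : tensor R I H) (B : tensor R H J) :
  ctr (ein A B) = ein (ctr B) (ctr A).
Proof.
apply: functional_extensionality => j; apply: functional_extensionality => i.
rewrite /ein /ctr rmorph_sum; apply: eq_bigr => k _.
by rewrite rmorphM mulrC.
Qed.

Lemma ctrK N (I : 'I_N -> nat) M (J : 'I_M -> nat) (A : tensor R I J) : ctr (ctr A) = A.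
Proof.
apply: functional_extensionality => i; apply: functional_extensionality => j.
by rewrite /ctr conjCK.
Qed.

Lemma eq_by_gram N (I : 'I_N -> nat) M (J : 'I_M -> nat) (X Y : tensor R I J)
  (W : tensor R I I) :
  ein X (ctr X) = W -> ein X (ctr Y) = W -> ein Y (ctr X) = W -> ein Y (ctr Y) = W ->
  X = Y.
Proof.
move=> h1 h2 h3 h4.
apply: functional_extensionality => i; apply: functional_extensionality => j.
have e1 := congr1 (fun f => f i i) h1.
have e2 := congr1 (fun f => f i i) h2.
have e3 := congr1 (fun f => f i i) h3.
have e4 := congr1 (fun f => f i i) h4.
rewrite /= /ein /ctr in e1 e2 e3 e4.
have hs : \sum_k (X i k - Y i k) * (X i k - Y i k)^* = 0.
  rewrite (eq_bigr (fun k => X i k * (X i k)^* - X i k * (Y i k)^*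
     - (Y i k * (X i k)^* - Y i k * (Y i k)^*))); last first.
    by move=> k _; rewrite rmorphB mulrBl !mulrBr.
  by rewrite !sumrB e1 e2 e3 e4 !subrr.
have := psumr_eq0P (fun k _ => mul_conjC_ge0 (X i k - Y i k)) hs (i:=j) isT.
by move/eqP; rewrite mul_conjC_eq0 subr_eq0 => /eqP.
Qed.

Lemma g1inv N (I : 'I_N -> nat) M (J : 'I_M -> nat) (A : tensor R I J) :
  exists G : tensor R J I, ein (ein A G) A = A.
Proof.
pose mA : 'M[R[i]]_(#|[eta midx I]|, #|[eta midx J]|) :=
  \matrix_(a, b) A (enum_val a) (enum_val b).
pose P := pinvmx mA.
exists (fun j i => P (enum_rank j) (enum_rank i)).
have hP : mA *m P *m mA = mA by apply: mulmxKpV; exact: submx_refl.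
apply: functional_extensionality => i; apply: functional_extensionality => j.
have := congr1 (fun m : 'M[R[i]]_(_, _) => m (enum_rank i) (enum_rank j)) hP.
rewrite /= !mxE !enum_rankK => <-.
have bj (T : finType) : {on [pred x | true], bijective (@enum_rank T)}.
  by exists enum_val => x _; [exact: enum_rankK | exact: enum_valK].
rewrite /ein [RHS](reindex _ (bj _)); apply: eq_bigr => k _.
rewrite [in RHS]mxE [in RHS]mxE !enum_rankK; congr (_ * _).
rewrite (reindex _ (bj _)); apply: eq_bigr => l _.
by rewrite [in RHS]mxE !enum_rankK.
Qed.

Lemma ctxr N (I : 'I_N -> nat) M (J : 'I_M -> nat) (P Q : tensor R I J) :
  P = Q -> forall L (G : 'I_L -> nat) (Z : tensor R J G), ein P Z = ein Q Z.
Proof. by move=> ->. Qed.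

Ltac zver h name := have name := ctxr h; repeat setoid_rewrite einA in name.

Lemma F1 N (I : 'I_N -> nat) M (J : 'I_M -> nat) (A : tensor R I J) (G : tensor R I I) :
  ein (ein (ein A (ctr A)) G) (ein A (ctr A)) = ein A (ctr A) ->
  ein (ein (ein A (ctr A)) G) A = A.
Proof.
move=> hG.
have hG' := congr1 (@ctr _ _ _ _ _) hG.
rewrite !ctr_ein !ctrK in hG'.
zver hG hGZ. zver hG' hG'Z.
rewrite !einA in hG hG'.
apply: (@eq_by_gram _ _ _ _ _ _ (ein A (ctr A))).
- by rewrite !ctr_ein !ctrK ?einA hGZ hG'.
- by rewrite ?einA hG.
- by rewrite !ctr_ein !ctrK ?einA hG'.
- by [].
Qed.

Lemma Fall N (I : 'I_N -> nat) M (J : 'I_M -> nat) (A : tensor R I J) (G : tensor R I I) :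
  ein (ein (ein A (ctr A)) G) (ein A (ctr A)) = ein A (ctr A) ->
  [/\ ein (ein (ein A (ctr A)) G) A = A,
      ein (ein (ein (ctr A) G) A) (ctr A) = ctr A &
      ctr (ein (ein (ctr A) G) A) = ein (ein (ctr A) G) A].
Proof.
move=> hG.
have hGh : ein (ein (ein A (ctr A)) (ctr G)) (ein A (ctr A)) = ein A (ctr A).
  have h := congr1 (@ctr _ _ _ _ _) hG; rewrite !ctr_ein !ctrK in h.
  by apply: etrans _ h; rewrite !einA.
have i1 := F1 hG.
have i2 := F1 hGh.
have ii : ein (ein (ein (ctr A) G) A) (ctr A) = ctr A.
  have h := congr1 (@ctr _ _ _ _ _) i2; rewrite !ctr_ein !ctrK in h.
  by move: h; rewrite ?einA.
split => //.
zver ii iiZ.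
rewrite !ctr_ein !ctrK.
transitivity (ein (ein (ctr A) G) (ein (ein (ein A (ctr A)) (ctr G)) A)); last by rewrite i2.
by rewrite ?einA iiZ.
Qed.

Lemma MP_exists N (I : 'I_N -> nat) M (J : 'I_M -> nat) (A : tensor R I J) :
  exists X, is_MP A X.
Proof.
have [G hG] := g1inv (ein A (ctr A)).
have [K hK] := g1inv (ein (ctr A) A).
have [i1 i2 i3] := Fall hG.
have [j1 j2 j3] : [/\ ein (ein (ein (ctr A) A) K) (ctr A) = ctr A,
      ein (ein (ein A K) (ctr A)) A = A &
      ctr (ein (ein A K) (ctr A)) = ein (ein A K) (ctr A)].
  have := @Fall _ _ _ _ (ctr A) K; rewrite !ctrK; exact.
exists (ein (ein (ein (ein (ctr A) G) A) K) (ctr A)).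
zver i1 i1Z. zver i2 i2Z.
have eAX : ein A (ein (ein (ein (ein (ctr A) G) A) K) (ctr A)) = ein (ein A K) (ctr A).
  by rewrite ?einA i1Z.
have eXA : ein (ein (ein (ein (ein (ctr A) G) A) K) (ctr A)) A = ein (ein (ctr A) G) A.
  by move: j2; rewrite ?einA => ->.
split.
- by rewrite eAX.
- by rewrite eXA ?einA i2Z.
- by rewrite eAX.
- by rewrite eXA.
Qed.

Lemma MP_uniq N (I : 'I_N -> nat) M (J : 'I_M -> nat) (A : tensor R I J) (X Y : tensor R J I) :
  is_MP A X -> is_MP A Y -> X = Y.
Proof.
move=> [x1 x2 x3 x4] [y1 y2 y3 y4].
have eX : X = ein (ein X A) Y.
  have hA : ctr A = ein (ctr A) (ein (ctr Y) (ctr A)) by rewrite -!ctr_ein y1.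
  transitivity (ein X (ein (ctr X) (ctr A))); first by rewrite -ctr_ein x3 -einA x2.
  rewrite hA -(einA (ctr X)) -ctr_ein x3 -ctr_ein y3.
  by rewrite -!einA x2.
have eY : Y = ein (ein X A) Y.
  have hA : ctr A = ein (ein (ctr A) (ctr X)) (ctr A) by rewrite -!ctr_ein -einA x1.
  transitivity (ein (ein (ctr A) (ctr Y)) Y); first by rewrite -ctr_ein y4 y2.
  rewrite hA (einA _ (ctr A)) -ctr_ein x4 -ctr_ein y4.
  by rewrite !einA -(einA Y) y2.
by rewrite eX -eY.
Qed.

Lemma pinvP N (I : 'I_N -> nat) M (J : 'I_M -> nat) (A : tensor R I J) : is_MP A (pinv A).
Proof. by rewrite /pinv; apply: epsilon_spec; exact: MP_exists. Qed.

Lemma pinvE N (I : 'I_N -> nat) M (J : 'I_M -> nat) (A : tensor R I J) X :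
  is_MP A X -> pinv A = X.
Proof. by move=> h; apply: (MP_uniq (pinvP A) h). Qed.

Lemma pinvK N (I : 'I_N -> nat) M (J : 'I_M -> nat) (A : tensor R I J) : pinv (pinv A) = A.
Proof. have [a1 a2 a3 a4] := pinvP A; exact: pinvE. Qed.

Lemma pinv_r N (I : 'I_N -> nat) M (J : 'I_M -> nat) (A : tensor R I J) :
  pinv A = ein (pinv A) (ein (ctr (pinv A)) (ctr A)).
Proof. have [x1 x2 x3 x4] := pinvP A. by rewrite -ctr_ein x3 -einA x2. Qed.

Lemma pinv_l N (I : 'I_N -> nat) M (J : 'I_M -> nat) (A : tensor R I J) :
  pinv A = ein (ein (ctr A) (ctr (pinv A))) (pinv A).
Proof. have [x1 x2 x3 x4] := pinvP A. by rewrite -ctr_ein x4 x2. Qed.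
End T.

Ltac zver h name := have name := ctxr h; repeat setoid_rewrite einA in name.

Theorem theorem3p12 (R : realType)
  (N : nat) (I : 'I_N -> nat) (K : nat) (H : 'I_K -> nat)
  (L : nat) (G : 'I_L -> nat) (M : nat) (J : 'I_M -> nat)
  (Rt : tensor R I H) (St : tensor R H G) (Tt : tensor R G J) :
  let A := ein (ein Rt St) Tt in
  let Api := pmp Rt A Tt in
  pmp (pinv Tt) Api (pinv Rt) = A.
Proof.
move=> A Api.
rewrite /Api /pmp !pinvK.
set X := ein (ein (pinv Rt) A) (pinv Tt).
have [r1 r2 r3 r4] := pinvP Rt.
have [t1 t2 t3 t4] := pinvP Tt.
have hX1 : ein (ein (pinv Rt) Rt) X = X by rewrite /X /A -!einA r2.
have t2' : ein (pinv Tt) (ein Tt (pinv Tt)) = pinv Tt by rewrite -einA t2.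
have hX2 : ein X (ein Tt (pinv Tt)) = X by rewrite /X /A !einA t2'.
have hXh1 : ein (ctr X) (ein (pinv Rt) Rt) = ctr X.
  by have := congr1 (@ctr _ _ _ _ _) hX1; rewrite ctr_ein r4.
have hXh2 : ein (ein Tt (pinv Tt)) (ctr X) = ctr X.
  by have := congr1 (@ctr _ _ _ _ _) hX2; rewrite ctr_ein t3.
have ha : ein (pinv X) (ein (pinv Rt) Rt) = pinv X.
  by rewrite [in LHS](pinv_r X) !einA hXh1 -pinv_r.
have hb : ein (ein Tt (pinv Tt)) (pinv X) = pinv X.
  by rewrite [in LHS](pinv_l X) -!einA hXh2 -pinv_l.
have key : ein (ein Tt (ein (ein (pinv Tt) (pinv X)) (pinv Rt))) Rt = pinv X.
  by rewrite !einA ha -einA hb.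
rewrite key pinvK.
have t1' : ein Tt (ein (pinv Tt) Tt) = Tt by rewrite -einA t1.
zver r1 r1Z.
by rewrite /X /A !einA t1' r1Z.
Qed.
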